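(* For partial $H$-modules $(M,\pi)$ and $(N,\rho)$ with standard dilations $((\overline M,T_\pi),\varphi_M)$ and $((\overline N,T_\rho),\varphi_N)$, and a morphism of partial $H$-modules $f:M\to N$, the formula $$\overline f\Big(\sum_i h_i\triangleright\varphi_M(m_i)\Big)=\sum_i h_i\triangleright\varphi_N(f(m_i))$$ gives a well-defined $H$-linear map $\overline f:\overline M\to\overline N$. The assignment $D(M)=\overline M$, $D(f)=\overline f$ is a functor $D:{}_H\mathcal M^{par}\to{}_H\mathcal M$ (the dilation functor). Moreover $D$ is additive and faithful, it sends injective morphisms to injective morphisms and surjective morphisms to surjective morphisms, and it preserves arbitrary coproducts.
   Context: Throughout, $k$ is a field and $H$ is a Hopf algebra over $k$ with bijective antipode $S$ and Sweedler notation $\Delta(h)=h_{(1)}\otimes h_{(2)}$. A partial $H$-module is a vector space $M$ with linear $\pi:H\to\mathrm{End}_k(M)$ satisfying, for all $h,k\in H$: - $\pi(1_H)=\mathrm{id}$; - $\pi(h)\pi(k_{(1)})\pi(S(k_{(2)}))=\pi(hk_{(1)})\pi(S(k_{(2)}))$; - $\pi(h_{(1)})\pi(S(h_{(2)}))\pi(k)=\pi(h_{(1)})\pi(S(h_{(2)})k)$; - $\pi(h)\pi(S(k_{(1)}))\pi(k_{(2)})=\pi(hS(k_{(1)}))\pi(k_{(2)})$; - $\pi(S(h_{(1)}))\pi(h_{(2)})\pi(k)=\pi(S(h_{(1)}))\pi(h_{(2)}k)$. Morphisms are linear maps commuting with all $\pi(h)$; they form the category ${}_H\mathcal M^{par}$.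 Standard dilation of $(M,\pi)$: $\operatorname{Hom}_k(H,M)$ is a left $H$-module via $(h\triangleright f)(k)=f(kh)$. Let $\varphi_M:M\to\operatorname{Hom}_k(H,M)$ be $\varphi_M(m)(h)=\pi(h)(m)$. Let $\overline M=H\triangleright\varphi_M(M)$ be the $H$-submodule of $\operatorname{Hom}_k(H,M)$ generated by $\varphi_M(M)$, and $T_\pi:\overline M\to\overline M$, $T_\pi(f)=\varphi_M(f(1_H))$. *)

(* Defs.v *)
From HB Require Import structures.
From mathcomp Require Import all_boot all_algebra.
From Stdlib Require Import ClassicalEpsilon.
Set Implicit Arguments.
Unset Strict Implicit.
Unset Printing Implicit Defensive.
Import GRing.Theory.
Local Open Scope ring_scope.

(* The comultiplication Delta(h) = sum h_(1) (x) h_(2) is represented by a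
   finite list of pairs (Sweedler representatives); equalities in H (x) H
   (resp. H (x) H (x) H) are expressed through the universal property, i.e.
   by testing against all bilinear (resp. trilinear) maps into every
   k-vector space. *)

Record hopf_data (k : fieldType) (H : algType k) := HopfData {
  comul : H -> seq (H * H);
  counit : H -> k;
  antipode : H -> H
}.

Definition bilin (k : fieldType) (A : lmodType k) (V : lmodType k)
  (B : A -> A -> V) : Prop :=
  (forall a x y z, B (a *: x + y) z = a *: B x z + B y z) /\
  (forall a x y z, B z (a *: x + y) = a *: B z x + B z y).

Definition trilin (k : fieldType) (A : lmodType k) (V : lmodType k)
  (T : A -> A -> A -> V) : Prop :=
  (forall a x y u v, T (a *: x + y) u v = a *: T x u v + T y u v) /\
  (forall a x y u v, T u (a *: x + y) v = a *: T u x v + T u y v) /\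
  (forall a x y u v, T u v (a *: x + y) = a *: T u v x + T u v y).

(* [tsum B t] is the image of the tensor represented by [t] under the
   linear map H (x) H -> V induced by the bilinear map [B]. *)
Definition tsum (k : fieldType) (H : algType k) (V : lmodType k)
  (B : H -> H -> V) (t : seq (H * H)) : V :=
  \sum_(p <- t) B p.1 p.2.

Definition is_hopf (k : fieldType) (H : algType k) (hp : hopf_data H) : Prop :=
  let D := comul hp in let eps := counit hp in let S := antipode hp in
  [/\
      (forall (V : lmodType k) (B : H -> H -> V), bilin B ->
         forall a x y, tsum B (D (a *: x + y)) = a *: tsum B (D x) + tsum B (D y)),
      (forall (V : lmodType k) (T : H -> H -> H -> V), trilin T ->
         forall h, \sum_(p <- D h) \sum_(q <- D p.1) T q.1 q.2 p.2
                 = \sum_(p <- D h) \sum_(q <- D p.2) T p.1 q.1 q.2),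
      (forall a x y, eps (a *: x + y) = a * eps x + eps y) /\
      (forall h, \sum_(p <- D h) eps p.1 *: p.2 = h) /\
      (forall h, \sum_(p <- D h) eps p.2 *: p.1 = h),
      (forall (V : lmodType k) (B : H -> H -> V), bilin B ->
         (forall x y, tsum B (D (x * y))
            = \sum_(p <- D x) \sum_(q <- D y) B (p.1 * q.1) (p.2 * q.2)) /\
         tsum B (D 1) = B 1 1) /\
      (forall x y, eps (x * y) = eps x * eps y) /\ eps 1 = 1 &
      [/\ (forall a x y, S (a *: x + y) = a *: S x + S y),
          (forall h, \sum_(p <- D h) S p.1 * p.2 = eps h *: 1),
          (forall h, \sum_(p <- D h) p.1 * S p.2 = eps h *: 1) &
          bijective S]].

Definition is_pmod (k : fieldType) (H : algType k) (hp : hopf_data H)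
  (M : lmodType k) (pi : H -> M -> M) : Prop :=
  let D := comul hp in let S := antipode hp in
  [/\ (forall h a m n, pi h (a *: m + n) = a *: pi h m + pi h n),
      (forall a x y m, pi (a *: x + y) m = a *: pi x m + pi y m),
      (forall m, pi 1 m = m) &
   [/\ (forall h g m, \sum_(p <- D g) pi h (pi p.1 (pi (S p.2) m))
                   = \sum_(p <- D g) pi (h * p.1) (pi (S p.2) m)),
      (forall h g m, \sum_(p <- D h) pi p.1 (pi (S p.2) (pi g m))
                   = \sum_(p <- D h) pi p.1 (pi (S p.2 * g) m)),
      (forall h g m, \sum_(p <- D g) pi h (pi (S p.1) (pi p.2 m))
                   = \sum_(p <- D g) pi (h * S p.1) (pi p.2 m)) &
      (forall h g m, \sum_(p <- D h) pi (S p.1) (pi p.2 (pi g m))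
                   = \sum_(p <- D h) pi (S p.1) (pi (p.2 * g) m))]].

Definition is_pmorph (k : fieldType) (H : algType k)
  (M N : lmodType k) (pi : H -> M -> M) (rho : H -> N -> N) (f : M -> N) : Prop :=
  (forall a m n, f (a *: m + n) = a *: f m + f n) /\
  (forall h m, f (pi h m) = rho h (f m)).

Definition is_hmod (k : fieldType) (H : algType k)
  (X : lmodType k) (act : H -> X -> X) : Prop :=
  [/\ (forall h a x y, act h (a *: x + y) = a *: act h x + act h y),
      (forall a g h x, act (a *: g + h) x = a *: act g x + act h x),
      (forall x, act 1 x = x) &
      (forall g h x, act (g * h) x = act g (act h x))].

(* Elements of Hom_k(H, M) are (linear) functions H -> M; H acts by
   (h |> F)(x) = F (x h). *)
Definition hact (k : fieldType) (H : algType k) (M : lmodType k)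
  (h : H) (F : H -> M) : H -> M := fun x => F (x * h).

Definition varphi (k : fieldType) (H : algType k) (M : lmodType k)
  (pi : H -> M -> M) (m : M) : H -> M := fun x => pi x m.

Definition dil (k : fieldType) (H : algType k) (M : lmodType k)
  (pi : H -> M -> M) (s : seq (H * M)) : H -> M :=
  fun x => \sum_(p <- s) hact p.1 (varphi pi p.2) x.

(* membership in  Mbar = H |> varphi_M(M), the H-submodule of Hom_k(H,M)
   generated by varphi_M(M): its elements are exactly the finite sums
   sum_i h_i |> varphi_M(m_i). *)
Definition in_dil (k : fieldType) (H : algType k) (M : lmodType k)
  (pi : H -> M -> M) (F : H -> M) : Prop :=
  exists s : seq (H * M), F = dil pi s.

(* The map fbar: an element F of Mbar is written (by choice) as
   sum_i h_i |> varphi_M(m_i), and sent to sum_i h_i |> varphi_N(f m_i).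
   (Outside Mbar the value is irrelevant.) *)
Definition dilmap (k : fieldType) (H : algType k) (M N : lmodType k)
  (pi : H -> M -> M) (rho : H -> N -> N) (f : M -> N) (F : H -> M) : H -> N :=
  let s := epsilon (inhabits [::]) (fun s : seq (H * M) => F = dil pi s) in
  dil rho (map (fun p => (p.1, f p.2)) s).

Definition is_coprod_par (k : fieldType) (H : algType k) (hp : hopf_data H)
  (I : Type) (Ms : I -> lmodType k) (pis : forall i, H -> Ms i -> Ms i)
  (C : lmodType k) (piC : H -> C -> C) (iota : forall i, Ms i -> C) : Prop :=
  (forall i, is_pmorph (pis i) piC (iota i)) /\
  forall (X : lmodType k) (sig : H -> X -> X), is_pmod hp sig ->
  forall g : forall i, Ms i -> X, (forall i, is_pmorph (pis i) sig (g i)) ->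
  exists u : C -> X,
    [/\ is_pmorph piC sig u,
        (forall i m, u (iota i m) = g i m) &
        forall v : C -> X, is_pmorph piC sig v ->
          (forall i m, v (iota i m) = g i m) -> forall c, v c = u c].

Definition hlin_on (k : fieldType) (H : algType k) (M : lmodType k)
  (P : (H -> M) -> Prop) (X : lmodType k) (act : H -> X -> X)
  (u : (H -> M) -> X) : Prop :=
  (forall a F G, P F -> P G -> u (fun x => a *: F x + G x) = a *: u F + u G) /\
  (forall h F, P F -> u (hact h F) = act h (u F)).

Definition is_coprod_hmod (k : fieldType) (H : algType k)
  (I : Type) (Ms : I -> lmodType k) (pis : forall i, H -> Ms i -> Ms i)
  (C : lmodType k) (piC : H -> C -> C)
  (j : forall i, (H -> Ms i) -> (H -> C)) : Prop :=
  forall (X : lmodType k) (act : H -> X -> X), is_hmod act ->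
  forall g : forall i, (H -> Ms i) -> X,
    (forall i, hlin_on (in_dil (pis i)) act (g i)) ->
  exists u : (H -> C) -> X,
    [/\ hlin_on (in_dil piC) act u,
        (forall i F, in_dil (pis i) F -> u (j i F) = g i F) &
        forall v : (H -> C) -> X, hlin_on (in_dil piC) act v ->
          (forall i F, in_dil (pis i) F -> v (j i F) = g i F) ->
          forall G, in_dil piC G -> v G = u G].

(* Main.v *)
Require Import Defs.
From HB Require Import structures.
From mathcomp Require Import all_boot all_algebra.
From Stdlib Require Import ClassicalEpsilon FunctionalExtensionality Eqdep.
Import GRing.Theory.
Local Open Scope ring_scope.
Set Implicit Arguments.
Unset Strict Implicit.

Definition bP (P : Prop) : bool := if excluded_middle_informative P then true else false.
Lemma bPP (P : Prop) : reflect P (bP P).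
Proof. rewrite /bP; case: excluded_middle_informative => h; constructor => //. Qed.

Section SubMod.
Variables (k : fieldType) (C : lmodType k) (P : C -> Prop).
Hypothesis P0 : P 0.
Hypothesis Plin : forall a x y, P x -> P y -> P (a *: x + y).
Definition Pb : {pred C} := fun c => bP (P c).
Lemma Pb_closed : GRing.subsemimod_closed Pb.
Proof.
split; first split.
- by apply/bPP.
- move=> x y /bPP Px /bPP Py; apply/bPP; rewrite -[x]scale1r; exact: Plin.
- move=> a x /bPP Px; apply/bPP; rewrite -[_ *: _]addr0; exact: Plin.
Qed.
HB.instance Definition _ := GRing.isSubmodClosed.Build k C Pb Pb_closed.
Inductive SubT (h0 : P 0) (hl : forall a x y, P x -> P y -> P (a *: x + y)) := mkS x & x \in Pb.
Definition ST := SubT P0 Plin.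
Definition vS (u : ST) := let: mkS x _ := u in x.
HB.instance Definition _ := [isSub for vS].
HB.instance Definition _ := [Choice of ST by <:].
HB.instance Definition _ := [SubChoice_isSubLmodule of ST by <:].
Lemma vS_lin a x y : vS (a *: x + y) = a *: vS x + vS y.
Proof. by rewrite !SubK. Qed.
End SubMod.

Section Lin.
Variables (k : fieldType) (A B : lmodType k) (f : A -> B).
Hypothesis hf : forall a x y, f (a *: x + y) = a *: f x + f y.
Lemma lin0 : f 0 = 0.
Proof. have := hf (-1) 0 0; rewrite scaleN1r oppr0 addr0 => ->; by rewrite scaleN1r addNr. Qed.
Lemma linD x y : f (x + y) = f x + f y.
Proof. by have := hf 1 x y; rewrite !scale1r. Qed.
Lemma linZ a x : f (a *: x) = a *: f x.
Proof. by rewrite -[a *: x]addr0 hf lin0 addr0. Qed.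
Lemma linN x : f (- x) = - f x.
Proof. by rewrite -scaleN1r linZ scaleN1r. Qed.
Lemma lin_sum (I : Type) (l : seq I) (F : I -> A) :
  f (\sum_(i <- l) F i) = \sum_(i <- l) f (F i).
Proof. elim: l => [|i l IH]; first by rewrite !big_nil lin0. by rewrite !big_cons linD IH. Qed.
End Lin.

Section Part1.
Variables (k : fieldType) (H : algType k).

Lemma dil_map (M N : lmodType k) (pi : H -> M -> M) (rho : H -> N -> N) (f : M -> N) :
  is_pmorph pi rho f -> forall s x,
  dil rho (map (fun p => (p.1, f p.2)) s) x = f (dil pi s x).
Proof.
move=> [hf hc] s x.
unfold dil.
rewrite big_map.
rewrite (lin_sum hf).
by apply: eq_bigr => p _; rewrite /hact /varphi hc.
Qed.

Lemma dilmap_in (M N : lmodType k) (pi : H -> M -> M) (rho : H -> N -> N) (f : M -> N) F :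
  is_pmorph pi rho f -> in_dil pi F -> dilmap pi rho f F = (fun x => f (F x)).
Proof.
move=> hf hF; rewrite /dilmap.
set s := epsilon _ _.
have -> : F = dil pi s by exact: (epsilon_spec (inhabits [::]) (fun s => F = dil pi s) hF).
apply: functional_extensionality => x; exact: dil_map.
Qed.


Definition pmlin (M : lmodType k) (pi : H -> M -> M) :=
  forall h a m n, pi h (a *: m + n) = a *: pi h m + pi h n.

Lemma pm_lin (hp : hopf_data H) (M : lmodType k) (pi : H -> M -> M) :
  is_pmod hp pi -> pmlin pi.
Proof. by case. Qed.

Lemma dil_nil (M : lmodType k) (pi : H -> M -> M) : dil pi [::] = (fun _ => 0).
Proof. by apply: functional_extensionality => x; rewrite /dil big_nil. Qed.

Lemma in_dil0 (M : lmodType k) (pi : H -> M -> M) : in_dil pi (fun _ => 0).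
Proof. by exists [::]; rewrite dil_nil. Qed.

Lemma dil_cat (M : lmodType k) (pi : H -> M -> M) s t x :
  dil pi (s ++ t) x = dil pi s x + dil pi t x.
Proof. by rewrite /dil big_cat. Qed.

Lemma dil_scale (M : lmodType k) (pi : H -> M -> M) a s x : pmlin pi ->
  dil pi (map (fun p => (p.1, a *: p.2)) s) x = a *: dil pi s x.
Proof.
move=> hl; rewrite /dil big_map scaler_sumr; apply: eq_bigr => p _.
by rewrite /hact /varphi (linZ (hl _)).
Qed.

Lemma in_dil_comb (M : lmodType k) (pi : H -> M -> M) a F G : pmlin pi ->
  in_dil pi F -> in_dil pi G -> in_dil pi (fun x => a *: F x + G x).
Proof.
move=> hl [s ->] [t ->]; exists (map (fun p => (p.1, a *: p.2)) s ++ t).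
by apply: functional_extensionality => x; rewrite dil_cat dil_scale.
Qed.

Lemma hact_dil (M : lmodType k) (pi : H -> M -> M) h s :
  hact h (dil pi s) = dil pi (map (fun p => (h * p.1, p.2)) s).
Proof.
apply: functional_extensionality => x; rewrite /hact /dil big_map.
by apply: eq_bigr => p _; rewrite /hact /varphi mulrA.
Qed.

Lemma in_dil_hact (M : lmodType k) (pi : H -> M -> M) h F :
  in_dil pi F -> in_dil pi (hact h F).
Proof. by move=> [s ->]; rewrite hact_dil; eexists. Qed.

Lemma varphi_dil (M : lmodType k) (pi : H -> M -> M) m :
  varphi pi m = dil pi [:: (1, m)].
Proof.
by apply: functional_extensionality => x; rewrite /dil big_seq1 /hact mulr1.
Qed.

Lemma in_dil_dilmap (M N : lmodType k) (pi : H -> M -> M) (rho : H -> N -> N) (f : M -> N) F :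
  in_dil rho (dilmap pi rho f F).
Proof. by rewrite /dilmap; eexists. Qed.

Lemma pmorph_add (M N : lmodType k) (pi : H -> M -> M) (rho : H -> N -> N) (f g : M -> N) :
  pmlin rho -> is_pmorph pi rho f -> is_pmorph pi rho g -> is_pmorph pi rho (fun m => f m + g m).
Proof.
move=> hl [f1 f2] [g1 g2]; split.
  by move=> a m n; rewrite f1 g1 scalerDr -!addrA; congr (_ + _); rewrite addrCA.
by move=> h m; rewrite f2 g2 (linD (hl h)).
Qed.

Lemma pmorph_comp (M N P : lmodType k) (pi : H -> M -> M) (rho : H -> N -> N) (sig : H -> P -> P) f g :
  is_pmorph pi rho f -> is_pmorph rho sig g -> is_pmorph pi sig (fun m => g (f m)).
Proof. by move=> [f1 f2] [g1 g2]; split=> *; rewrite ?f1 ?g1 ?f2 ?g2. Qed.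

Lemma pmorph_id (M : lmodType k) (pi : H -> M -> M) : is_pmorph pi pi (fun m => m).
Proof. by []. Qed.


Fixpoint allP (T : Type) (P : T -> Prop) (l : seq T) : Prop :=
  match l with [::] => True | x :: l => P x /\ allP P l end.

Lemma allP_cat (T : Type) (P : T -> Prop) l1 l2 : allP P (l1 ++ l2) <-> allP P l1 /\ allP P l2.
Proof. elim: l1 => [|x l IH] /=; first by intuition. by rewrite IH; intuition. Qed.

Lemma allP_map (T U : Type) (P : U -> Prop) (f : T -> U) l : allP P (map f l) <-> allP (fun x => P (f x)) l.
Proof. elim: l => [|x l IH] //=; by rewrite IH. Qed.

Lemma allP_impl (T : Type) (P Q : T -> Prop) l : (forall x, P x -> Q x) -> allP P l -> allP Q l.
Proof. move=> hPQ; elim: l => [|x l IH] //= [px pl]; split; auto. Qed.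

Lemma allP_filter (T : Type) (P : T -> Prop) (b : pred T) l : allP P l -> allP P (filter b l).
Proof. elim: l => [|x l IH] /=; first by move=> _. move=> [px pl]; case: (b x) => /=; [split|]; auto. Qed.

Lemma in_dil_sum (M : lmodType k) (pi : H -> M -> M) (l : seq (H -> M)) : pmlin pi ->
  allP (in_dil pi) l -> in_dil pi (fun x => \sum_(F <- l) F x).
Proof.
move=> hl; elim: l => [|F l IH] /=.
  move=> _; have -> : (fun x : H => \sum_(F <- ([::] : seq (H -> M))) F x) = (fun _ => 0 : M).
    by apply: functional_extensionality => x; rewrite big_nil.
  exact: in_dil0.
move=> [hF hl']; have := in_dil_comb 1 hl hF (IH hl').
have -> : (fun x => 1 *: F x + \sum_(F <- l) F x) = (fun x => \sum_(F <- F :: l) F x).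
  by apply: functional_extensionality => x; rewrite big_cons scale1r.
by [].
Qed.

Lemma in_dil_scale (M : lmodType k) (pi : H -> M -> M) a F : pmlin pi ->
  in_dil pi F -> in_dil pi (fun x => a *: F x).
Proof.
move=> hl hF; have := in_dil_comb a hl hF (in_dil0 pi).
have -> : (fun x => a *: F x + (fun _ : H => (0 : M)) x) = (fun x => a *: F x).
  by apply: functional_extensionality => x; rewrite addr0.
by [].
Qed.

Section W.
Variables (M : lmodType k) (pi : H -> M -> M) (X : lmodType k) (act : H -> X -> X)
  (w : (H -> M) -> X).
Hypotheses (hl : pmlin pi) (hw : hlin_on (in_dil pi) act w).

Lemma w_zero : w (fun _ => 0) = 0.
Proof.
have := hw.1 (-1) _ _ (in_dil0 pi) (in_dil0 pi).
have -> : (fun x : H => (-1) *: (fun _ : H => (0 : M)) x + (fun _ : H => 0) x) = (fun _ => 0).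
  by apply: functional_extensionality => x; rewrite scaler0 addr0.
by move=> ->; rewrite scaleN1r addNr.
Qed.

Lemma w_scale a F : in_dil pi F -> w (fun x => a *: F x) = a *: w F.
Proof.
move=> hF; have := hw.1 a _ _ hF (in_dil0 pi).
have -> : (fun x : H => a *: F x + (fun _ : H => (0 : M)) x) = (fun x => a *: F x).
  by apply: functional_extensionality => x; rewrite addr0.
by move=> ->; rewrite w_zero addr0.
Qed.

Lemma w_add F G : in_dil pi F -> in_dil pi G -> w (fun x => F x + G x) = w F + w G.
Proof.
move=> hF hG; have := hw.1 1 _ _ hF hG.
have -> : (fun x => 1 *: F x + G x) = (fun x => F x + G x).
  by apply: functional_extensionality => x; rewrite scale1r.
by rewrite scale1r.
Qed.

Lemma w_sum (l : seq (H -> M)) : allP (in_dil pi) l ->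
  w (fun x => \sum_(F <- l) F x) = \sum_(F <- l) w F.
Proof.
elim: l => [|F l IH] /=.
  move=> _; have -> : (fun x : H => \sum_(F <- ([::] : seq (H -> M))) F x) = (fun _ => 0 : M).
    by apply: functional_extensionality => x; rewrite big_nil.
  by rewrite big_nil w_zero.
move=> [hF hl'].
have -> : (fun x => \sum_(F <- F :: l) F x) = (fun x => F x + \sum_(F <- l) F x).
  by apply: functional_extensionality => x; rewrite big_cons.
by rewrite w_add ?IH ?big_cons //; exact: in_dil_sum.
Qed.
End W.

End Part1.

Unset Implicit Arguments.
Section Coprod.
Variables (k : fieldType) (H : algType k) (hp : hopf_data H) (I : Type)
  (Ms : I -> lmodType k) (pis : forall i, H -> Ms i -> Ms i)
  (C : lmodType k) (piC : H -> C -> C) (iota : forall i, Ms i -> C).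
Hypotheses (hpis : forall i : I, is_pmod hp (pis i)) (hpiC : is_pmod hp piC)
  (hcop : is_coprod_par hp pis piC iota).

Lemma hiota i : is_pmorph (pis i) piC (iota i).
Proof. by case: hcop. Qed.
Lemma iota_lin i : forall a x y, iota i (a *: x + y) = a *: iota i x + iota i y.
Proof. by case: (hiota i). Qed.
Lemma piC_lin h : forall a x y, piC h (a *: x + y) = a *: piC h x + piC h y.
Proof. by case: hpiC. Qed.

Definition gen (c : C) := exists l : seq {i : I & Ms i},
  c = \sum_(e <- l) iota (tag e) (tagged e).

Lemma gen0 : gen 0.
Proof. by exists [::]; rewrite big_nil. Qed.

Lemma gen_lin a x y : gen x -> gen y -> gen (a *: x + y).
Proof.
move=> [l ->] [l' ->].
exists (map (fun e => existT (fun j => Ms j : Type) (tag e) (a *: tagged e)) l ++ l').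
rewrite big_cat big_map scaler_sumr /=; congr (_ + _); apply: eq_bigr => e _.
by rewrite (linZ (iota_lin _)).
Qed.

Lemma gen_pi h c : gen c -> gen (piC h c).
Proof.
move=> [l ->]; exists (map (fun e => existT (fun j => Ms j : Type) (tag e) (pis (tag e) h (tagged e))) l).
rewrite big_map (lin_sum (piC_lin h)); apply: eq_bigr => e _ /=.
by case: (hiota (tag e)) => _ ->.
Qed.

Let STy := ST gen0 gen_lin.

Definition piS h (x : STy) : STy :=
  Sub (piC h (val x)) (introT (bPP _) (gen_pi h _ (elimT (bPP _) (valP x)))).

Lemma val_piS h x : val (piS h x) = piC h (val x).
Proof. by rewrite SubK. Qed.

Lemma val_lin : forall a (x y : STy), val (a *: x + y) = a *: val x + val y.
Proof. exact: vS_lin. Qed.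

Lemma piS_pmod : is_pmod hp piS.
Proof.
case: hpiC => l1 l2 l3 [a1 a2 a3 a4]; split; [| | |split].
- by move=> h a m n; apply: val_inj; rewrite !(val_lin, val_piS) l1.
- by move=> a x y m; apply: val_inj; rewrite !(val_lin, val_piS) l2.
- by move=> m; apply: val_inj; rewrite !(val_lin, val_piS) l3.
- move=> h g m; apply: val_inj; rewrite !(lin_sum val_lin).
  under eq_bigr do rewrite !val_piS; under [RHS]eq_bigr do rewrite !val_piS; exact: a1.
- move=> h g m; apply: val_inj; rewrite !(lin_sum val_lin).
  under eq_bigr do rewrite !val_piS; under [RHS]eq_bigr do rewrite !val_piS; exact: a2.
- move=> h g m; apply: val_inj; rewrite !(lin_sum val_lin).
  under eq_bigr do rewrite !val_piS; under [RHS]eq_bigr do rewrite !val_piS; exact: a3.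
- move=> h g m; apply: val_inj; rewrite !(lin_sum val_lin).
  under eq_bigr do rewrite !val_piS; under [RHS]eq_bigr do rewrite !val_piS; exact: a4.
Qed.

Lemma gen1 i m : gen (iota i m).
Proof. by exists [:: existT (fun j => Ms j : Type) i m]; rewrite big_seq1. Qed.

Definition iotaS i (m : Ms i) : STy := Sub (iota i m) (introT (bPP _) (gen1 i m)).

Lemma val_iotaS i m : val (iotaS i m) = iota i m.
Proof. by rewrite SubK. Qed.

Lemma iotaS_pmorph i : is_pmorph (pis i) piS (iotaS i).
Proof.
case: (hiota i) => h1 h2; split.
  by move=> a m n; apply: val_inj; rewrite !(val_lin, val_iotaS) h1.
by move=> h m; apply: val_inj; rewrite !(val_piS, val_iotaS) h2.
Qed.

Lemma gen_all c : gen c.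
Proof.
case: hcop => _ hu.
have [u [hu1 hu2 _]] := hu _ _ piS_pmod _ iotaS_pmorph.
have [u0 [_ _ hu0]] := hu _ _ hpiC _ hiota.
have e1 : val (u c) = u0 c.
  apply: (hu0 (fun c => val (u c))).
    case: hu1 => v1 v2; split.
      by move=> a m n; rewrite v1 val_lin.
    by move=> h m; rewrite v2 val_piS.
  by move=> i m; rewrite hu2 val_iotaS.
have e2 : c = u0 c by apply: (hu0 (fun c => c)) => //; exact: pmorph_id.
rewrite e2 -e1; exact: (elimT (bPP _) (valP (u c))).
Qed.


Definition castM (i j : I) (e : i = j) (m : Ms i) : Ms j :=
  eq_rect i (fun t => Ms t : Type) m j e.

Definition pj (j i : I) (m : Ms i) : Ms j :=
  match excluded_middle_informative (i = j) with
  | left e => castM i j e m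
  | right _ => 0 end.

Lemma pis_lin i h : forall a x y, pis i h (a *: x + y) = a *: pis i h x + pis i h y.
Proof. by case: (hpis i). Qed.

Lemma pj_pmorph j i : is_pmorph (pis i) (pis j) (pj j i).
Proof.
rewrite /pj; case: excluded_middle_informative => [e|ne].
  by destruct e.
split; first by move=> *; rewrite scaler0 addr0.
by move=> h m; rewrite (lin0 (pis_lin j h)).
Qed.

Lemma proj_ex j : exists p : C -> Ms j, is_pmorph piC (pis j) p /\
  forall i m, p (iota i m) = pj j i m.
Proof.
case: hcop => _ hu; have [u [hu1 hu2 _]] := hu _ _ (hpis j) _ (fun i => pj_pmorph j i).
by exists u.
Qed.

Lemma pj_self j m : pj j j m = m.
Proof.
rewrite /pj; case: excluded_middle_informative => [e|ne]; last by [].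
by rewrite (Eqdep.EqdepTheory.UIP_refl _ _ e).
Qed.

Lemma pj_other j i m : i <> j -> pj j i m = 0.
Proof. by rewrite /pj; case: excluded_middle_informative. Qed.


Definition FE := {i : I & (H -> Ms i : Type)}.
Definition mkF (i : I) (F : H -> Ms i) : FE := existT (fun j => (H -> Ms j : Type)) i F.
Definition isum (L : seq FE) : H -> C := fun x => \sum_(e <- L) iota (tag e) (tagged e x).
Definition okE (e : FE) := in_dil (pis (tag e)) (tagged e).
Definition sel (j : I) (e : FE) : H -> Ms j := fun x => pj j (tag e) (tagged e x).

Lemma sel_ok j e : okE e -> in_dil (pis j) (sel j e).
Proof.
case: e => i F /= hF; rewrite /sel /=.
rewrite -(dilmap_in (pj_pmorph j i) hF); exact: in_dil_dilmap.
Qed.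

Lemma isum_sel j L x : isum L x = iota j (\sum_(e <- L) sel j e x)
   + \sum_(e <- L | ~~ bP (tag e = j)) iota (tag e) (tagged e x).
Proof.
rewrite /isum (lin_sum (iota_lin j)) [X in _ = _ + X]big_mkcond /= -big_split /=.
apply: eq_bigr => -[i F] _ /=; rewrite /sel /=.
case: bPP => [e|ne] /=.
  by subst i; rewrite pj_self addr0.
by rewrite pj_other // (lin0 (iota_lin j)) add0r.
Qed.

Lemma proj_isum j (p : C -> Ms j) : is_pmorph piC (pis j) p ->
  (forall i m, p (iota i m) = pj j i m) ->
  forall L x, p (isum L x) = \sum_(e <- L) sel j e x.
Proof.
move=> [hp1 _] hp2 L x; rewrite /isum (lin_sum hp1); apply: eq_bigr => e _.
by rewrite hp2.
Qed.

Section G.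
Variables (X : lmodType k) (act : H -> X -> X) (g : forall i, (H -> Ms i) -> X).
Hypotheses (hactm : is_hmod act) (hg : forall i, hlin_on (in_dil (pis i)) act (g i)).

Definition gsum (L : seq FE) := \sum_(e <- L) g (tag e) (tagged e).

Lemma gsum_sel j L : gsum L = \sum_(e <- L) g j (sel j e)
   + \sum_(e <- L | ~~ bP (tag e = j)) g (tag e) (tagged e).
Proof.
rewrite /gsum [X in _ = _ + X]big_mkcond /= -big_split /=.
apply: eq_bigr => -[i F] _ /=; rewrite /sel /=.
case: bPP => [e|ne] /=.
  subst i; rewrite addr0; congr (g j _).
  by apply: functional_extensionality => x; rewrite pj_self.
have -> : (fun x => pj j i (F x)) = (fun _ => 0).
  by apply: functional_extensionality => x; rewrite pj_other.
by rewrite (w_zero (hg j)) add0r.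
Qed.

Lemma W (n : nat) : forall L : seq FE, (size L <= n)%N -> allP okE L -> (forall x, isum L x = 0) -> gsum L = 0.
Proof.
elim: n => [|n IH] [|e0 rest] //=; try by rewrite /gsum big_nil.
move=> hs [he0 hrest] hz.
set L := e0 :: rest.
have hL : allP okE L by split.
set j := tag e0.
have [p [hp1 hp2]] := proj_ex j.
have hsel : forall x, \sum_(e <- L) sel j e x = 0.
  by move=> x; rewrite -(proj_isum j p hp1 hp2) hz; case: hp1 => hp1 _; rewrite (lin0 hp1).
have hA : \sum_(e <- L) g j (sel j e) = 0.
  rewrite -(big_map (sel j) xpredT (g j)) -(w_sum (fun h => pis_lin j h) (hg j)).
    have -> : (fun x => \sum_(F <- [seq sel j e | e <- L]) F x) = (fun _ => 0).
      by apply: functional_extensionality => x; rewrite big_map hsel.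
    exact: (w_zero (hg j)).
  by apply/allP_map; apply: allP_impl hL => e he; exact: sel_ok.
set L1 := filter (fun e => ~~ bP (tag e = j)) L.
have hL1 : allP okE L1 by exact: allP_filter.
have hz1 : forall x, isum L1 x = 0.
  move=> x; have := hz x; rewrite (isum_sel j) hsel (lin0 (iota_lin j)) add0r.
  by rewrite /isum big_filter.
have hs1 : (size L1 <= n)%N.
  rewrite /L1 /= /j; case: bPP => // _ /=.
  by rewrite size_filter; apply: leq_trans (count_size _ _) _.
rewrite -/(gsum L) (gsum_sel j) hA add0r -big_filter -/L1.
exact: IH.
Qed.


Lemma isum_cat L L' x : isum (L ++ L') x = isum L x + isum L' x.
Proof. by rewrite /isum big_cat. Qed.
Lemma gsum_cat L L' : gsum (L ++ L') = gsum L + gsum L'.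
Proof. by rewrite /gsum big_cat. Qed.

Definition scaleL (a : k) (L : seq FE) :=
  map (fun e : FE => mkF (tag e) (fun x => a *: tagged e x)) L.

Lemma isum_scale a L x : isum (scaleL a L) x = a *: isum L x.
Proof.
rewrite /isum big_map scaler_sumr; apply: eq_bigr => e _ /=.
by rewrite (linZ (iota_lin _)).
Qed.

Lemma ok_scale a L : allP okE L -> allP okE (scaleL a L).
Proof.
move=> hL; apply/allP_map; apply: allP_impl hL => -[i F] hF.
exact: (in_dil_scale a (fun h => pis_lin i h) hF).
Qed.

Lemma gsum_scale a L : allP okE L -> gsum (scaleL a L) = a *: gsum L.
Proof.
move=> hL; rewrite /gsum big_map scaler_sumr.
elim: L hL => [|[i F] L IH] /=; first by rewrite !big_nil.
move=> [hF hL]; rewrite !big_cons IH //=; congr (_ + _).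
exact: (w_scale (hg i)).
Qed.

Lemma wd L L' : allP okE L -> allP okE L' -> (forall x, isum L x = isum L' x) ->
  gsum L = gsum L'.
Proof.
move=> hL hL' he.
have := W (size (L ++ scaleL (-1) L')) (L ++ scaleL (-1) L') (leqnn _).
rewrite gsum_cat gsum_scale // scaleN1r => h.
apply/eqP; rewrite -subr_eq0; apply/eqP; apply: h.
  by apply/allP_cat; split=> //; exact: ok_scale.
by move=> x; rewrite isum_cat isum_scale he scaleN1r addrN.
Qed.

Definition hactL h (L : seq FE) := map (fun e : FE => mkF (tag e) (hact h (tagged e))) L.

Lemma isum_hact h L : isum (hactL h L) = hact h (isum L).
Proof.
apply: functional_extensionality => x; rewrite /isum /hact big_map.
by apply: eq_bigr.
Qed.

Lemma ok_hact h L : allP okE L -> allP okE (hactL h L).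
Proof.
move=> hL; apply/allP_map; apply: allP_impl hL => -[i F] hF.
exact: in_dil_hact.
Qed.

Lemma gsum_hact h L : allP okE L -> gsum (hactL h L) = act h (gsum L).
Proof.
move=> hL; case: hactm => a1 _ _ _.
rewrite /gsum big_map (lin_sum (a1 h)).
elim: L hL => [|[i F] L IH] /=; first by rewrite !big_nil.
move=> [hF hL]; rewrite !big_cons IH //=; congr (_ + _).
by case: (hg i) => _ ->.
Qed.

Lemma isum_ok L : allP okE L -> in_dil piC (isum L).
Proof.
move=> hL.
have -> : isum L = (fun x => \sum_(Fc <- map (fun (e : FE) (x : H) => iota (tag e) (tagged e x)) L) Fc x).
  by apply: functional_extensionality => x; rewrite big_map.
apply: in_dil_sum; first exact: (pm_lin hpiC).
apply/allP_map; apply: allP_impl hL => -[i F] hF /=.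
rewrite -(dilmap_in (hiota i) hF); exact: in_dil_dilmap.
Qed.

Lemma rep G : in_dil piC G -> exists L, allP okE L /\ G = isum L.
Proof.
move=> [s ->]; elim: s => [|[h c] s [L [hL eL]]].
  exists [::]; split=> //; apply: functional_extensionality => x.
  by rewrite /dil /isum !big_nil.
have [l hl] := gen_all c.
exists (map (fun e : {i : I & (Ms i : Type)} => mkF (tag e) (hact h (varphi (pis (tag e)) (tagged e)))) l ++ L).
split.
  apply/allP_cat; split=> //; apply/allP_map.
  elim: l {hl} => [|e l IHl] //=; split=> //.
  apply: in_dil_hact; exists [:: (1, tagged e)]; exact: varphi_dil.
apply: functional_extensionality => x.
rewrite isum_cat -eL /dil big_cons; congr (_ + _).
rewrite /isum big_map /hact /varphi /= hl (lin_sum (piC_lin _)).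
apply: eq_bigr => -[i m] _ /=.
by case: (hiota i) => _ ->.
Qed.

Definition uu (G : H -> C) : X :=
  gsum (epsilon (inhabits [::]) (fun L => allP okE L /\ G = isum L)).

Lemma uu_isum L : allP okE L -> uu (isum L) = gsum L.
Proof.
move=> hL; rewrite /uu.
have [h1 h2] := epsilon_spec (inhabits [::]) (fun L0 => allP okE L0 /\ isum L = isum L0)
  (ex_intro _ L (conj hL erefl)).
apply: wd => // x; by rewrite -h2.
Qed.

End G.

Theorem coprod_main : is_coprod_hmod pis piC (fun i => dilmap (pis i) piC (iota i)).
Proof.
move=> X act hactm g hg.
have Uis := uu_isum X act g hg.
have Gs := gsum_scale X act g hg.
have Gh := gsum_hact X act g hactm hg.
exists (uu X g); split.
- split.
  + move=> a F G hF hG.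
    have [L [hL ->]] := rep F hF.
    have [L' [hL' ->]] := rep G hG.
    have -> : (fun x => a *: isum L x + isum L' x) = isum (scaleL a L ++ L').
      by apply: functional_extensionality => x; rewrite isum_cat isum_scale.
    rewrite !Uis //; last by apply/allP_cat; split=> //; exact: ok_scale.
    by rewrite gsum_cat Gs.
  + move=> h F hF; have [L [hL ->]] := rep F hF.
    rewrite -isum_hact !Uis //; last exact: ok_hact.
    by rewrite Gh.
- move=> i F hF; rewrite (dilmap_in (hiota i) hF).
  have -> : (fun x => iota i (F x)) = isum [:: mkF i F].
    by apply: functional_extensionality => x; rewrite /isum big_seq1.
  by rewrite Uis /gsum /= ?big_seq1 //.
- move=> v hv hvg G hG; have [L [hL ->]] := rep G hG.
  rewrite Uis //.
  have -> : isum L = (fun x => \sum_(Fc <- map (fun (e : FE) (x : H) => iota (tag e) (tagged e x)) L) Fc x).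
    by apply: functional_extensionality => x; rewrite big_map.
  rewrite (w_sum (pm_lin hpiC) hv); last first.
    apply/allP_map; apply: allP_impl hL => -[i F] hF /=.
    rewrite -(dilmap_in (hiota i) hF); exact: in_dil_dilmap.
  rewrite /gsum big_map; elim: L hL => [|[i F] L IH] /=; first by rewrite !big_nil.
  move=> [hF hL]; rewrite !big_cons IH //; congr (_ + _).
  by rewrite -(hvg i F hF) (dilmap_in (hiota i) hF).
Qed.

End Coprod.

Lemma coprod_part (k : fieldType) (H : algType k) (hp : hopf_data H) :
  (forall (I : Type) (Ms : I -> lmodType k) (pis : forall i, H -> Ms i -> Ms i)
          (C : lmodType k) (piC : H -> C -> C) (iota : forall i, Ms i -> C),
     (forall i, is_pmod hp (pis i)) -> is_pmod hp piC ->
     is_coprod_par hp pis piC iota ->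
     is_coprod_hmod pis piC (fun i => dilmap (pis i) piC (iota i))).
Proof.
move=> I Ms pis C piC iota hpis hpiC hcop; exact: (coprod_main k H hp I Ms pis C piC iota hpis hpiC hcop).
Qed.

Theorem mainTheorem9 (k : fieldType) (H : algType k) (hp : hopf_data H) :
  is_hopf hp ->
  [/\
  (* fbar is well defined by the formula, lands in Nbar, and is H-linear *)
  (forall (M N : lmodType k) (pi : H -> M -> M) (rho : H -> N -> N) (f : M -> N),
     is_pmod hp pi -> is_pmod hp rho -> is_pmorph pi rho f ->
     [/\ (forall s : seq (H * M),
            dilmap pi rho f (dil pi s) = dil rho (map (fun p => (p.1, f p.2)) s)),
         (forall F, in_dil pi F -> in_dil rho (dilmap pi rho f F)),
         (forall a F G, in_dil pi F -> in_dil pi G ->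
            dilmap pi rho f (fun x => a *: F x + G x)
            = (fun x => a *: dilmap pi rho f F x + dilmap pi rho f G x)) &
         (forall h F, in_dil pi F ->
            dilmap pi rho f (hact h F) = hact h (dilmap pi rho f F))]),
  (* D preserves identities *)
  (forall (M : lmodType k) (pi : H -> M -> M), is_pmod hp pi ->
     forall F, in_dil pi F -> dilmap pi pi (fun m => m) F = F),
  (* D preserves composition *)
  (forall (M N P : lmodType k) (pi : H -> M -> M) (rho : H -> N -> N)
          (sig : H -> P -> P) (f : M -> N) (g : N -> P),
     is_pmod hp pi -> is_pmod hp rho -> is_pmod hp sig ->
     is_pmorph pi rho f -> is_pmorph rho sig g ->
     forall F, in_dil pi F ->
       dilmap pi sig (fun m => g (f m)) F = dilmap rho sig g (dilmap pi rho f F)),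
  (* D is additive and faithful *)
  (forall (M N : lmodType k) (pi : H -> M -> M) (rho : H -> N -> N) (f g : M -> N),
     is_pmod hp pi -> is_pmod hp rho -> is_pmorph pi rho f -> is_pmorph pi rho g ->
     (forall F, in_dil pi F ->
        dilmap pi rho (fun m => f m + g m) F
        = (fun x => dilmap pi rho f F x + dilmap pi rho g F x)) /\
     ((forall F, in_dil pi F -> dilmap pi rho f F = dilmap pi rho g F) ->
        forall m, f m = g m)) &
  (* D preserves injective and surjective morphisms *)
  (forall (M N : lmodType k) (pi : H -> M -> M) (rho : H -> N -> N) (f : M -> N),
     is_pmod hp pi -> is_pmod hp rho -> is_pmorph pi rho f ->
     (injective f -> forall F G, in_dil pi F -> in_dil pi G ->
        dilmap pi rho f F = dilmap pi rho f G -> F = G) /\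
     ((forall n, exists m, f m = n) -> forall G, in_dil rho G ->
        exists F, in_dil pi F /\ dilmap pi rho f F = G))] /\
  (* D preserves arbitrary coproducts *)
  (forall (I : Type) (Ms : I -> lmodType k) (pis : forall i, H -> Ms i -> Ms i)
          (C : lmodType k) (piC : H -> C -> C) (iota : forall i, Ms i -> C),
     (forall i, is_pmod hp (pis i)) -> is_pmod hp piC ->
     is_coprod_par hp pis piC iota ->
     is_coprod_hmod pis piC (fun i => dilmap (pis i) piC (iota i))).
Proof.
move=> _; split; last exact: coprod_part.
split.
- move=> M N pi rho f hpi hrho hf; have hl := pm_lin hpi; split.
  + move=> s; rewrite dilmap_in //; last by eexists.
    by apply: functional_extensionality => x; rewrite (dil_map hf).
  + by move=> F _; apply: in_dil_dilmap.
  + move=> a F G hF hG; rewrite !dilmap_in //; last exact: in_dil_comb.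
    by apply: functional_extensionality => x; case: hf => hf1 _; rewrite hf1.
  + move=> h F hF; rewrite !dilmap_in //; exact: in_dil_hact.
- move=> M pi _ F hF; rewrite dilmap_in //.
- move=> M N P pi rho sig f g _ _ _ hf hg F hF.
  have hfF : in_dil rho (fun x => f (F x)).
    by rewrite -(dilmap_in hf hF); apply: in_dil_dilmap.
  by rewrite (dilmap_in (pmorph_comp hf hg) hF) (dilmap_in hf hF) (dilmap_in hg hfF).
- move=> M N pi rho f g hpi hrho hf hg; split.
    move=> F hF; rewrite !dilmap_in //; exact: pmorph_add (pm_lin hrho) hf hg.
  move=> heq m; have hv : in_dil pi (varphi pi m) by eexists; apply: varphi_dil.
  have := heq _ hv; rewrite !dilmap_in //.
  move=> /(f_equal (fun F => F 1)); rewrite /varphi.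
  by case: hpi => _ _ -> _.
- move=> M N pi rho f hpi hrho hf; split.
    move=> finj F G hF hG; rewrite (dilmap_in hf hF) (dilmap_in hf hG) => e.
    apply: functional_extensionality => x; apply: finj.
    exact: (f_equal (fun F => F x) e).
  move=> fsurj G [t ->].
  have [s hs] : exists s, map (fun p => (p.1, f p.2)) s = t.
    elim: t => [|[h n] t [s hs]]; first by exists [::].
    have [m hm] := fsurj n; exists ((h, m) :: s); by rewrite /= hm hs.
  exists (dil pi s); split; first by eexists.
  rewrite (dilmap_in hf); last by eexists.
  by rewrite -hs; apply: functional_extensionality => x; rewrite (dil_map hf).
Qed.
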